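(* Let $\mathcal A$ be a mixed online algorithm for an online problem $(\mathcal X,\mathcal R,d)$ with start state $s^0$ and cost function $\mathrm{cost}$. Then there is a behavioral online algorithm $\mathcal A'$ for the same problem such that for every finite request sequence $\varrho=r^1\dots r^n$, $$E\big(\mathrm{cost}_{\mathcal A'}(\varrho)\big)=E\big(\mathrm{cost}_{\mathcal A}(\varrho)\big).$$
   Context: Online problem: a set $\mathcal X$ of states (configurations), a set $\mathcal R$ of requests, a start state $s^0\in\mathcal X$, a function $d:\mathcal X\times\mathcal X\to[0,\infty)$ with $d(x,x)=0$ and $d(x,z)\le d(x,y)+d(y,z)$, and a cost function $\mathrm{cost}:\mathcal X\times\mathcal R\times\mathcal X\to[0,\infty)$ ($\mathrm{cost}(x,r,y)$ is the cost of serving request $r$ while moving from $x$ to $y$) satisfying $\mathrm{cost}(u,r,v)\le d(u,x)+\mathrm{cost}(x,r,y)+d(y,v)$ for all $u,x,y,v\in\mathcal X$, $r\in\mathcal R$. $\Pi$ denotes the set of finitely supported probability distributions on $\mathcal X$; a point mass at $x$ is identified with $x$. For $\pi,\pi'\in\Pi$ and $r\in\mathcal R$, $\mathrm{cost}(\pi,r,\pi')$ is the minimum transportation cost: the minimum of $\sum_{x,y}\gamma(x,y)\,\mathrm{cost}(x,r,y)$ over all probability distributions $\gamma$ on $\mathrm{supp}(\pi)\times\mathrm{supp}(\pi')$ whose first marginal is $\pi$ and second marginal is $\pi'$. Mixed online algorithm $\mathcal A$: a set $\mathcal M$ of memory states, a start memory state $m^0$, and for each full state $k=(\pi,m)\in\Pi\times\mathcal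 M$ (reachable by $\mathcal A$) and each request $r$, a finite list of ''subsequent'' full states $k_i=(\pi_i,m_i)$, $i=1,\dots,p$, with weights $\lambda_i>0$, $\sum_i\lambda_i=1$. Starting from $k^0=(s^0,m^0)$, on request $r^t$ the algorithm moves from $k^{t-1}$ to $k^t=k_i$ (the subsequents for $(k^{t-1},r^t)$) with probability $\lambda_i$. The cost of such a step is $\mathrm{cost}_{\mathcal A}(k,r)=\mathrm{cost}(\pi,r,\bar\pi)$ where $\bar\pi=\sum_i\lambda_i\pi_i$, and $\mathrm{cost}_{\mathcal A}(\varrho)=\sum_{t=1}^n\mathrm{cost}_{\mathcal A}(k^{t-1},r^t)$ (a random variable). Behavioral online algorithm: a set $\mathcal M$ of memory states, a start memory state $m^0$, and for each $(x,m)\in\mathcal X\times\mathcal M$ and $r\in\mathcal R$ a finitely supported probability distribution on $\mathcal X\times\mathcal M$. Starting from $(x^0,m^0)=(s^0,m^0)$, on request $r^t$ it draws $(x^t,m^t)$ from the distribution associated with $(x^{t-1},m^{t-1},r^t)$. Its cost on $\varrho$ is the random variable $\sum_{t=1}^n\mathrm{cost}(x^{t-1},r^t,x^t)$. *)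

(* Defs.v *)
From HB Require Import structures.
From mathcomp Require Import all_boot all_order all_algebra.
From mathcomp Require Import boolp classical_sets reals.
From Stdlib Require List.
Set Implicit Arguments. Unset Strict Implicit. Unset Printing Implicit Defensive.
Import Order.TTheory GRing.Theory Num.Theory.
Local Open Scope ring_scope.
Local Open Scope classical_set_scope.

Section Defs.
Variables (R : realType) (X Rq : Type).

Fixpoint cundup (s : seq X) : seq X :=
  match s with
  | [::] => [::]
  | x :: s' => if `[< List.In x s' >] then cundup s' else x :: cundup s'
  end.

Record fdist := FDist {
  fd_pmf : X -> R;
  fd_supp : seq X;
  fd_ge0 : forall x, 0 <= fd_pmf x;
  fd_suppP : forall x, fd_pmf x != 0 -> List.In x fd_supp;
  fd_sum1 : \sum_(x <- cundup fd_supp) fd_pmf x = 1 }.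

Definition dirac_pmf (s : X) : X -> R := fun y => if `[< y = s >] then 1 else 0.

Lemma dirac_ge0 s x : 0 <= dirac_pmf s x.
Proof. by rewrite /dirac_pmf; case: ifP. Qed.

Lemma dirac_suppP s x : dirac_pmf s x != 0 -> List.In x [:: s].
Proof.
rewrite /dirac_pmf; case: ifP => [/asboolW -> _|_]; first by left.
by rewrite eqxx.
Qed.

Lemma dirac_sum1 s : \sum_(x <- cundup [:: s]) dirac_pmf s x = 1.
Proof.
rewrite /= asboolF //= big_cons big_nil addr0 /dirac_pmf asboolT //.
Qed.

(* The point mass at s (identified with s). *)
Definition dirac (s : X) : fdist :=
  @FDist (dirac_pmf s) [:: s] (@dirac_ge0 s) (@dirac_suppP s) (dirac_sum1 s).

(* gamma is a coupling (transport plan) between the finitely supported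
   weight functions (f, S) and (g, T), S and T duplicate-free support lists. *)
Definition coupling (f : X -> R) (S : seq X) (g : X -> R) (T : seq X)
    (gam : X -> X -> R) : Prop :=
  (forall x y, 0 <= gam x y) /\
  (forall x, List.In x S -> \sum_(y <- T) gam x y = f x) /\
  (forall y, List.In y T -> \sum_(x <- S) gam x y = g y).

Definition transport_cost (c : X -> Rq -> X -> R) (f : X -> R) (s : seq X)
    (r : Rq) (g : X -> R) (t : seq X) : R :=
  inf [set v | exists gam, coupling f (cundup s) g (cundup t) gam /\
        v = \sum_(x <- cundup s) \sum_(y <- cundup t) gam x y * c x r y].

Section Mixed.
Variables (M : Type) (s0 : X) (m0 : M).
Variable next : (fdist * M) -> Rq -> seq ((fdist * M) * R).

Inductive reachable : fdist * M -> Prop :=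
  | reach0 : reachable (dirac s0, m0)
  | reachS k r k' l : reachable k -> List.In (k', l) (next k r) -> reachable k'.

Definition mixed_valid : Prop :=
  forall k r, reachable k ->
    (forall kl, List.In kl (next k r) -> 0 < kl.2) /\
    \sum_(kl <- next k r) kl.2 = 1.

Definition mix_pmf (k : fdist * M) (r : Rq) : X -> R :=
  fun x => \sum_(kl <- next k r) kl.2 * fd_pmf kl.1.1 x.
Definition mix_supp (k : fdist * M) (r : Rq) : seq X :=
  flatten [seq fd_supp kl.1.1 | kl <- next k r].

Definition mixed_step_cost (c : X -> Rq -> X -> R) (k : fdist * M) (r : Rq) : R :=
  transport_cost c (fd_pmf k.1) (fd_supp k.1) r (mix_pmf k r) (mix_supp k r).

Fixpoint mixed_runs (k : fdist * M) (rs : seq Rq) : seq (R * seq (fdist * M)) :=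
  match rs with
  | [::] => [:: (1, [::])]
  | r :: rs' => flatten [seq [seq (kl.2 * pr.1, kl.1 :: pr.2)
                               | pr <- mixed_runs kl.1 rs'] | kl <- next k r]
  end.

Fixpoint mixed_run_cost (c : X -> Rq -> X -> R) (k : fdist * M) (rs : seq Rq)
    (run : seq (fdist * M)) : R :=
  match rs, run with
  | r :: rs', k' :: run' => mixed_step_cost c k r + mixed_run_cost c k' rs' run'
  | _, _ => 0
  end.

Definition mixed_expected_cost (c : X -> Rq -> X -> R) (rs : seq Rq) : R :=
  \sum_(pr <- mixed_runs (dirac s0, m0) rs)
     pr.1 * mixed_run_cost c (dirac s0, m0) rs pr.2.
End Mixed.

Section Behavioral.
Variables (M : Type) (s0 : X) (m0 : M).
Variable next : X -> M -> Rq -> seq ((X * M) * R).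

Definition behav_valid : Prop :=
  forall x m r,
    (forall e, List.In e (next x m r) -> 0 <= e.2) /\
    \sum_(e <- next x m r) e.2 = 1.

Fixpoint behav_runs (xm : X * M) (rs : seq Rq) : seq (R * seq (X * M)) :=
  match rs with
  | [::] => [:: (1, [::])]
  | r :: rs' => flatten [seq [seq (e.2 * pr.1, e.1 :: pr.2)
                               | pr <- behav_runs e.1 rs'] | e <- next xm.1 xm.2 r]
  end.

Fixpoint behav_run_cost (c : X -> Rq -> X -> R) (x : X) (rs : seq Rq)
    (run : seq (X * M)) : R :=
  match rs, run with
  | r :: rs', xm :: run' => c x r xm.1 + behav_run_cost c xm.1 rs' run'
  | _, _ => 0
  end.

Definition behav_expected_cost (c : X -> Rq -> X -> R) (rs : seq Rq) : R :=
  \sum_(pr <- behav_runs (s0, m0) rs) pr.1 * behav_run_cost c s0 rs pr.2.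
End Behavioral.

End Defs.

(* Main.v *)
Require Import Defs.
From HB Require Import structures.
From mathcomp Require Import all_boot all_order all_algebra.
From mathcomp Require Import boolp classical_sets reals.
From mathcomp Require Import topology normedtype ring.
From Stdlib Require List.
Import Order.TTheory GRing.Theory Num.Theory.
Import numFieldTopology.Exports numFieldNormedType.Exports.
Local Open Scope ring_scope.
Local Open Scope classical_set_scope.

Lemma InP (A : eqType) (x : A) (s : seq A) : List.In x s <-> x \in s.
Proof.
elim: s => [|a s IH] /=; first by split.
rewrite in_cons; split.
- by case=> [->|/IH ->]; rewrite ?eqxx ?orbT.
- by case/orP => [/eqP ->|/IH]; [left|right].
Qed.

Section OptCoupling.
Variables (R : realType) (X : eqType).
Variables (f g : X -> R) (S T : seq X) (w : X -> X -> R).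
Hypotheses (uS : uniq S) (uT : uniq T).

Let P := [seq (x, y) | x <- S, y <- T].
Let N := size P.
Let tP : N.-tuple (X * X) := in_tuple P.
Let p (j : 'I_N) := tnth tP j.

Lemma uP : uniq P.
Proof. by apply: allpairs_uniq => // [[? ?] [? ?]] _ _ [-> ->]. Qed.

Lemma sumP (G : X * X -> R) :
  \sum_(x <- S) \sum_(y <- T) G (x, y) = \sum_(j < N) G (p j).
Proof.
have := big_tuple 0 +%R tP xpredT G.
rewrite /= => <-.
by rewrite -big_allpairs.
Qed.

Lemma p_inj : injective p.
Proof.
move=> i j Eij.
have Ei : p i = nth (p i) P i by apply: tnth_nth.
have Ej : p j = nth (p i) P j by apply: tnth_nth.
have : nth (p i) P i == nth (p i) P j by rewrite -Ei -Ej Eij.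
rewrite (@nth_uniq _ _ P); [by move=> /eqP /val_inj| exact: ltn_ord | exact: ltn_ord | exact: uP].
Qed.

Lemma mem_p j : ((p j).1 \in S) && ((p j).2 \in T).
Proof.
have : p j \in P by apply: mem_tnth.
by case/allpairsP => [[x y] /= [xS yT ->]]; rewrite xS yT.
Qed.

Lemma row_sum (G : X * X -> R) x : x \in S ->
  \sum_(y <- T) G (x, y) = \sum_(j < N | (p j).1 == x) G (p j).
Proof.
move=> xS; rewrite [RHS]big_mkcond /=.
have := sumP (fun q => if q.1 == x then G q else 0); rewrite /= => <-.
rewrite [RHS](bigD1_seq x) //= eqxx /= [X in _ + X]big1 ?addr0 //.
by move=> x' /negbTE ->; rewrite big1.
Qed.

Lemma col_sum (G : X * X -> R) y : y \in T ->
  \sum_(x <- S) G (x, y) = \sum_(j < N | (p j).2 == y) G (p j).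
Proof.
move=> yT; rewrite [RHS]big_mkcond /=.
have := sumP (fun q => if q.2 == y then G q else 0); rewrite /= => <-.
apply: eq_bigr => x _.
rewrite [RHS](bigD1_seq y) //= eqxx /= [X in _ + X]big1 ?addr0 //.
by move=> y' /negbTE ->.
Qed.

Definition Cset := [set v : 'rV[R]_N | (forall j, 0 <= v ord0 j) /\
  (forall x, x \in S -> \sum_(j < N | (p j).1 == x) v ord0 j = f x) /\
  (forall y, y \in T -> \sum_(j < N | (p j).2 == y) v ord0 j = g y)].
Definition Fc (v : 'rV[R]_N) := \sum_(j < N) v ord0 j * w (p j).1 (p j).2.
Definition Vset := [set z | exists gam, coupling f S g T gam /\
   z = \sum_(x <- S) \sum_(y <- T) gam x y * w x y].

Lemma V_eq : Vset = Fc @` Cset.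
Proof.
rewrite eqEsubset; split.
- move=> z [gam [[g0 [gr gc]] ->]]; exists (\row_j gam (p j).1 (p j).2).
    split; first by move=> j; rewrite mxE.
    split=> [x xS|y yT].
      rewrite (eq_bigr (fun j => gam (p j).1 (p j).2)) => [|j _]; last by rewrite mxE.
      rewrite -(row_sum (fun q => gam q.1 q.2)) //; exact/gr/InP.
    rewrite (eq_bigr (fun j => gam (p j).1 (p j).2)) => [|j _]; last by rewrite mxE.
    rewrite -(col_sum (fun q => gam q.1 q.2)) //; exact/gc/InP.
  rewrite /Fc (sumP (fun q => gam q.1 q.2 * w q.1 q.2)).
  by apply: eq_bigr => j _; rewrite mxE.
- move=> z [v [v0 [vr vc]] <-].
  pose gam x y := \sum_(j < N | p j == (x, y)) v ord0 j.
  have gamp j : gam (p j).1 (p j).2 = v ord0 j.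
    rewrite /gam -surjective_pairing (eq_bigl (fun i => i == j)) ?big_pred1_eq //.
    by move=> i; rewrite inj_eq //; exact: p_inj.
  exists gam; split; last first.
    rewrite (sumP (fun q => gam q.1 q.2 * w q.1 q.2)) /Fc.
    by apply: eq_bigr => j _ /=; rewrite gamp.
  split; first by move=> x y; apply: sumr_ge0.
  split=> [x /InP xS|y /InP yT].
    rewrite (row_sum (fun q => gam q.1 q.2)) // -vr //.
    by apply: eq_bigr => j _; rewrite gamp.
  rewrite (col_sum (fun q => gam q.1 q.2)) // -vc //.
  by apply: eq_bigr => j _; rewrite gamp.
Qed.

Lemma cont_sum_seq (s : seq 'I_N) (Q : pred 'I_N) (a : 'I_N -> R) :
  continuous (fun v : 'rV[R]_N => \sum_(j <- s | Q j) v ord0 j * a j).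
Proof.
elim: s => [|j s IH].
  under eq_fun do rewrite big_nil.
  exact: cst_continuous.
under eq_fun do rewrite big_cons.
case: (Q j) => // v.
apply: (@continuousD _ _ _ (fun v : 'rV[R]_N => v ord0 j * a j)); last exact: IH.
apply: (@continuousM _ _ (fun v : 'rV[R]_N => v ord0 j) (fun=> a j)).
  exact: coord_continuous.
exact: cst_continuous.
Qed.

Lemma cont_sum (Q : pred 'I_N) (a : 'I_N -> R) :
  continuous (fun v : 'rV[R]_N => \sum_(j < N | Q j) v ord0 j * a j).
Proof. exact: cont_sum_seq. Qed.

Lemma Cset_closed : closed Cset.
Proof.
have -> : Cset = (\bigcap_(j in setT) ((fun v : 'rV[R]_N => v ord0 j) @^-1` [set z | 0 <= z]))
   `&` (\bigcap_(x in [set x | x \in S])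
          ((fun v : 'rV[R]_N => \sum_(j < N | (p j).1 == x) v ord0 j * 1) @^-1` [set z | z = f x]))
   `&` (\bigcap_(y in [set y | y \in T])
          ((fun v : 'rV[R]_N => \sum_(j < N | (p j).2 == y) v ord0 j * 1) @^-1` [set z | z = g y])).
  rewrite /Cset; apply/seteqP; split => v /=.
    move=> [v0 [vr vc]]; split; [split|].
    - by move=> j _; apply: v0.
    - by move=> x xS /=; rewrite -(vr x xS); apply: eq_bigr => j _; rewrite mulr1.
    - by move=> y yT /=; rewrite -(vc y yT); apply: eq_bigr => j _; rewrite mulr1.
  move=> [[v0 vr] vc]; split; first by move=> j; apply: v0.
  split=> [x xS|y yT].
    by rewrite -(vr x xS) /=; apply: eq_bigr => j _; rewrite mulr1.
  by rewrite -(vc y yT) /=; apply: eq_bigr => j _; rewrite mulr1.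
apply: closedI; first apply: closedI.
- apply: closed_bigI => j _; apply: preimage_closed; last exact: closed_ge.
  by move=> v _; apply: coord_continuous.
- apply: closed_bigI => x _; apply: preimage_closed; last exact: closed_eq.
  by move=> v _; apply: cont_sum.
- apply: closed_bigI => y _; apply: preimage_closed; last exact: closed_eq.
  by move=> v _; apply: cont_sum.
Qed.

Lemma Cset_compact : compact Cset.
Proof.
have Bc : compact [set v : 'rV[R]_N | forall j, `[0, f (p j).1]%classic (v ord0 j)].
  by apply: (@rV_compact _ _ (fun j => `[0, f (p j).1]%classic)) => j; apply: segment_compact.
apply: (subclosed_compact Cset_closed Bc).
move=> v [v0 [vr vc]] j /=; rewrite in_itv /= v0 /=.
have /andP[xS _] := mem_p j.
rewrite -(vr _ xS) (bigD1 j) //= lerDl; apply: sumr_ge0 => i _; exact: v0.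
Qed.

Lemma opt_coupling : (exists gam, coupling f S g T gam) ->
  exists gam, coupling f S g T gam /\
    inf Vset = \sum_(x <- S) \sum_(y <- T) gam x y * w x y.
Proof.
move=> [gam0 cg0].
have Fcont : continuous Fc by apply: cont_sum.
pose W := (fun v => - Fc v) @` Cset.
have Wc : compact W.
  apply: continuous_compact (Cset_compact).
  apply: continuous_subspaceT => v.
  by apply: continuousN; apply: Fcont.
have W0 : W !=set0.
  have : Vset (\sum_(x <- S) \sum_(y <- T) gam0 x y * w x y) by exists gam0.
  by rewrite V_eq => -[v Cv _]; exists (- Fc v); exists v.
have WsupW : W (sup W).
  have Wcl : closed W by apply: compact_closed => //; apply: Rhausdorff.
  have ub : has_ubound W by case: (compact_has_sup W0 Wc).
  by move: (closure_sup W0 ub); rewrite -(closure_id W).1.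
have infE : inf Vset = - sup W.
  by rewrite /inf V_eq image_comp.
case: WsupW => v Cv Ev.
have : Vset (Fc v) by rewrite V_eq; exists v.
case=> gam [cg Egam]; exists gam; split => //.
by rewrite infE -Ev opprK.
Qed.

End OptCoupling.
Arguments InP {A x s}.
Arguments opt_coupling {R X f g S T} w.
Lemma InPl (A : eqType) (x : A) (s : seq A) : List.In x s -> x \in s.
Proof. by move/InP. Qed.
Lemma InPr (A : eqType) (x : A) (s : seq A) : x \in s -> List.In x s.
Proof. by move/InP. Qed.
Arguments InPl {A x s}.
Arguments InPr {A x s}.

Set Implicit Arguments. Unset Strict Implicit. Unset Printing Implicit Defensive.
Local Close Scope classical_set_scope.

Section ListLemmas.
Variable R : realType.

Lemma eq_big_In (A : Type) (s : seq A) (F G : A -> R) :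
  (forall a, List.In a s -> F a = G a) -> \sum_(a <- s) F a = \sum_(a <- s) G a.
Proof.
elim: s => [|a s IH] H; first by rewrite !big_nil.
rewrite !big_cons H /=; last by left.
by rewrite IH // => b Hb; apply: H; right.
Qed.

Lemma sum_ge0_In (A : Type) (s : seq A) (F : A -> R) :
  (forall a, List.In a s -> 0 <= F a) -> 0 <= \sum_(a <- s) F a.
Proof.
elim: s => [|a s IH] H; first by rewrite big_nil.
rewrite big_cons addr_ge0 //; first by apply: H; left.
by apply: IH => b Hb; apply: H; right.
Qed.

Lemma psum0_In (A : Type) (s : seq A) (F : A -> R) :
  (forall a, List.In a s -> 0 <= F a) -> \sum_(a <- s) F a = 0 ->
  forall a, List.In a s -> F a = 0.
Proof.
elim: s => [|a s IH] H //=; rewrite big_cons => /eqP.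
rewrite paddr_eq0; [|by apply: H; left|by apply: sum_ge0_In => b Hb; apply: H; right].
case/andP => /eqP Fa /eqP Fs b [<-//|Hb].
by apply: IH => // d Hd; apply: H; right.
Qed.

Lemma In_flatten2 (A B C : Type) (L : seq A) (T : seq B) (h : A -> B -> C) e :
  List.In e (flatten [seq [seq h a b | b <- T] | a <- L]) ->
  exists a b, List.In a L /\ List.In b T /\ e = h a b.
Proof.
elim: L => [|a L IH] //= /List.in_app_iff [|/IH [a' [b [Ha [Hb ->]]]]].
  by move/List.in_map_iff => [b [<- Hb]]; exists a, b; split; [left|].
by exists a', b; split; [right|].
Qed.
End ListLemmas.

Section Main.
Variables (R : realType) (X Rq : Type) (s0 : X) (c : X -> Rq -> X -> R).
Variables (M : Type) (m0 : M)
  (next : (fdist R X * M) -> Rq -> seq ((fdist R X * M) * R)).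
Hypothesis hA : mixed_valid s0 m0 next.

HB.instance Definition _ := gen_eqMixin X.

Lemma cundupE (s : seq X) : cundup s = undup s.
Proof.
elim: s => //= x s ->.
case: asboolP => [/InPl -> // | H].
by rewrite (_ : (x \in s) = false) //; apply/negP => /InPr.
Qed.

Lemma sum_undup_cat (L1 L2 : seq X) (F : X -> R) :
  (forall x, F x != 0 -> (x \in L1) = (x \in L2)) ->
  \sum_(x <- undup L1) F x = \sum_(x <- undup (L1 ++ L2)) F x.
Proof.
move=> H.
have -> : \sum_(x <- undup L1) F x = \sum_(x <- undup (L1 ++ L2) | x \in L1) F x.
  rewrite -[RHS]big_filter; apply: perm_big; apply: uniq_perm.
  - exact: undup_uniq.
  - by rewrite filter_uniq // undup_uniq.
  by move=> x; rewrite mem_filter !mem_undup mem_cat; case: (x \in L1).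
rewrite big_mkcond; apply: eq_big_seq => x.
rewrite mem_undup mem_cat; case: ifP => // xL1 /= xL2.
have [//|Fx] := eqVneq (F x) 0.
by move: (H x Fx); rewrite xL1 xL2.
Qed.

Lemma sum_undup (L1 L2 : seq X) (F : X -> R) :
  (forall x, F x != 0 -> (x \in L1) = (x \in L2)) ->
  \sum_(x <- undup L1) F x = \sum_(x <- undup L2) F x.
Proof.
move=> H; rewrite (sum_undup_cat H) (@sum_undup_cat L2 L1 F) => [|x /H ->//].
apply: perm_big; apply: perm_undup => x; rewrite !mem_cat; exact: orbC.
Qed.


Notation reach := (reachable s0 m0 next).
Definition pi (k : fdist R X * M) := fd_pmf k.1.
Definition Sk (k : fdist R X * M) := undup (fd_supp k.1).
Definition bar k r := mix_pmf next k r.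
Definition Tk k r := undup (mix_supp next k r).

Lemma pi_ge0 k x : 0 <= pi k x.
Proof. exact: fd_ge0. Qed.

Lemma pi_supp k x : pi k x != 0 -> x \in Sk k.
Proof. by move=> H; rewrite /Sk mem_undup; apply: InPl; apply: fd_suppP. Qed.

Lemma pi_sum1 k : \sum_(x <- Sk k) pi k x = 1.
Proof. by rewrite /Sk -cundupE; exact: fd_sum1. Qed.

Lemma reach_next k r kl : reach k -> List.In kl (next k r) -> reach kl.1.
Proof. by case: kl => k' l Hk Hin; apply: reachS Hk Hin. Qed.

Lemma lam_gt0 k r kl : reach k -> List.In kl (next k r) -> 0 < kl.2.
Proof. by move=> Hk; have [H1 _] := hA r Hk; apply: H1. Qed.

Lemma lam_sum1 k r : reach k -> \sum_(kl <- next k r) kl.2 = 1.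
Proof. by move=> Hk; have [_ H2] := hA r Hk; apply: H2. Qed.

Lemma mem_mix k r kl y : List.In kl (next k r) -> y \in fd_supp kl.1.1 ->
  y \in mix_supp next k r.
Proof.
rewrite /mix_supp; elim: (next k r) => //= a L IH [<-|H] Hy; rewrite mem_cat.
  by rewrite Hy.
by rewrite IH ?orbT.
Qed.

Lemma bar_ge0 k r y : reach k -> 0 <= bar k r y.
Proof.
move=> Hk; apply: sum_ge0_In => kl Hin.
by rewrite mulr_ge0 ?fd_ge0 // ltW // (lam_gt0 Hk Hin).
Qed.

Lemma bar_sum1 k r : reach k -> \sum_(y <- Tk k r) bar k r y = 1.
Proof.
move=> Hk; rewrite /bar /mix_pmf /= exchange_big /= -(lam_sum1 r Hk).
apply: eq_big_In => kl Hin; rewrite -mulr_sumr.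
have -> : \sum_(i <- Tk k r) fd_pmf kl.1.1 i = 1.
  rewrite /Tk (@sum_undup _ (fd_supp kl.1.1)) ?(pi_sum1 kl.1) //.
  move=> y Hy0; have Hy := InPl (fd_suppP Hy0); rewrite Hy; exact: (mem_mix Hin Hy).
by rewrite mulr1.
Qed.

Lemma bar_zero k r y kl : reach k -> bar k r y = 0 -> List.In kl (next k r) ->
  kl.2 * pi kl.1 y = 0.
Proof.
move=> Hk H0 Hin; apply: (psum0_In _ H0) => // a Ha.
by rewrite mulr_ge0 ?fd_ge0 // ltW // (lam_gt0 Hk Ha).
Qed.

Lemma exists_G : exists G : (fdist R X * M) -> Rq -> X -> X -> R,
  forall k r, reach k ->
    coupling (pi k) (Sk k) (bar k r) (Tk k r) (G k r) /\
    mixed_step_cost next c k r =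
      \sum_(x <- Sk k) \sum_(y <- Tk k r) G k r x y * c x r y.
Proof.
have H : forall kr : (fdist R X * M) * Rq, exists gam : X -> X -> R,
    reach kr.1 -> coupling (pi kr.1) (Sk kr.1) (bar kr.1 kr.2) (Tk kr.1 kr.2) gam /\
    mixed_step_cost next c kr.1 kr.2 =
      \sum_(x <- Sk kr.1) \sum_(y <- Tk kr.1 kr.2) gam x y * c x kr.2 y.
  case=> k r /=; case: (pselect (reach k)) => Hk; last first.
    by exists (fun _ _ => 0) => /Hk.
  have cp : coupling (pi k) (Sk k) (bar k r) (Tk k r) (fun x y => pi k x * bar k r y).
    split; first by move=> x y; rewrite mulr_ge0 ?pi_ge0 ?bar_ge0.
    split=> [x _|y _].
      by rewrite -mulr_sumr bar_sum1 ?mulr1.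
    by rewrite -mulr_suml pi_sum1 mul1r.
  have := opt_coupling (fun x y => c x r y) (undup_uniq _) (undup_uniq _) (ex_intro _ _ cp).
  case=> gam [cg Hinf]; exists gam => _; split => //.
  by rewrite /mixed_step_cost /transport_cost !cundupE; exact: Hinf.
have [G HG] := choice H.
by exists (fun k r => G (k, r)) => k r Hk; apply: (HG (k, r)).
Qed.

Section Beh.
Variable G : (fdist R X * M) -> Rq -> X -> X -> R.
Hypothesis HG : forall k r, reach k ->
    coupling (pi k) (Sk k) (bar k r) (Tk k r) (G k r) /\
    mixed_step_cost next c k r =
      \sum_(x <- Sk k) \sum_(y <- Tk k r) G k r x y * c x r y.

Lemma G_ge0 k r x y : reach k -> 0 <= G k r x y.
Proof. by move=> Hk; case: (@HG k r Hk) => -[H _] _. Qed.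

Lemma G_row k r x : reach k -> x \in Sk k -> \sum_(y <- Tk k r) G k r x y = pi k x.
Proof. by move=> Hk xS; case: (@HG k r Hk) => -[_ [H _]] _; apply: H; apply: InPr. Qed.

Lemma G_col k r y : reach k -> y \in Tk k r -> \sum_(x <- Sk k) G k r x y = bar k r y.
Proof. by move=> Hk yT; case: (@HG k r Hk) => -[_ [_ H]] _; apply: H; apply: InPr. Qed.

Lemma G_cost k r : reach k -> mixed_step_cost next c k r =
      \sum_(x <- Sk k) \sum_(y <- Tk k r) G k r x y * c x r y.
Proof. by move=> Hk; case: (@HG k r Hk). Qed.

Lemma G_zero_row k r x y : reach k -> x \in Sk k -> pi k x = 0 -> y \in Tk k r ->
  G k r x y = 0.
Proof.
move=> Hk xS p0 yT.
apply: (@psum0_In _ _ (Tk k r) (G k r x)); last exact: InPr.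
  by move=> a _; apply: G_ge0.
by rewrite G_row.
Qed.

Lemma G_zero_col k r x y : reach k -> y \in Tk k r -> bar k r y = 0 -> x \in Sk k ->
  G k r x y = 0.
Proof.
move=> Hk yT b0 xS.
apply: (@psum0_In _ _ (Sk k) (fun x => G k r x y)); last exact: InPr.
  by move=> a _; apply: G_ge0.
by rewrite G_col.
Qed.

Definition q k r (kl : (fdist R X * M) * R) y := kl.2 * pi kl.1 y / bar k r y.

Lemma q_sum k r y : \sum_(kl <- next k r) q k r kl y = bar k r y / bar k r y.
Proof. by rewrite /q -mulr_suml. Qed.

Lemma Gq k r x y : reach k -> x \in Sk k -> y \in Tk k r ->
  G k r x y * (bar k r y / bar k r y) = G k r x y.
Proof.
move=> Hk xS yT; have [b0|b0] := eqVneq (bar k r y) 0.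
  by rewrite (G_zero_col Hk yT b0 xS) mul0r.
by rewrite divff ?mulr1.
Qed.

Lemma barq k r kl y : reach k -> List.In kl (next k r) ->
  bar k r y * q k r kl y = kl.2 * pi kl.1 y.
Proof.
move=> Hk Hin; rewrite /q; have [b0|b0] := eqVneq (bar k r y) 0.
  by rewrite b0 mul0r (bar_zero Hk b0 Hin).
by rewrite mulrCA divff ?mulr1.
Qed.

Definition wgt k r x kl y := G k r x y / pi k x * q k r kl y.

Definition next' (x : X) (k : fdist R X * M) (r : Rq) :
    seq ((X * (fdist R X * M)) * R) :=
  if `[< reach k /\ pi k x != 0 >] then
    flatten [seq [seq ((y, kl.1), wgt k r x kl y) | y <- Tk k r] | kl <- next k r]
  else [:: ((x, k), 1)].

Lemma valid' : behav_valid next'.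
Proof.
move=> x k r; rewrite /next'; case: asboolP => [[Hk px]|_]; last first.
  by split; [move=> e [<-|]|rewrite big_cons big_nil addr0].
have xS := pi_supp px.
split.
  move=> e He; have [kl [y [Hin [_ ->]]]] := In_flatten2 He; rewrite /= /wgt /q.
  by rewrite !mulr_ge0 ?invr_ge0 ?G_ge0 ?pi_ge0 ?bar_ge0 // ltW // (lam_gt0 Hk Hin).
rewrite big_flatten /= big_map.
rewrite (eq_bigr (fun kl => \sum_(y <- Tk k r) wgt k r x kl y)); last first.
  by move=> kl _; rewrite big_map.
rewrite exchange_big /=.
rewrite (eq_big_seq (fun y => G k r x y / pi k x)); last first.
  move=> y yT; rewrite /wgt -mulr_sumr q_sum mulrAC Gq //.
by rewrite -mulr_suml G_row // divff.
Qed.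

Definition Bm (xm : X * (fdist R X * M)) rs :=
  \sum_(pr <- behav_runs next' xm rs) pr.1.
Definition Bc (xm : X * (fdist R X * M)) rs :=
  \sum_(pr <- behav_runs next' xm rs) pr.1 * behav_run_cost c xm.1 rs pr.2.

Lemma Bm1 xm rs : Bm xm rs = 1.
Proof.
elim: rs xm => [|r rs IH] xm; first by rewrite /Bm /= big_cons big_nil addr0.
rewrite /Bm /= big_flatten /= big_map.
rewrite (eq_bigr (fun e => e.2)) => [|e _]; last first.
  rewrite big_map /= -mulr_sumr.
  by have := IH e.1; rewrite /Bm => ->; rewrite mulr1.
by case: (valid' xm.1 xm.2 r).
Qed.

Lemma Bc_cons xm r rs : Bc xm (r :: rs) =
  \sum_(e <- next' xm.1 xm.2 r) e.2 * (c xm.1 r e.1.1 + Bc e.1 rs).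
Proof.
rewrite /Bc /= big_flatten /= big_map; apply: eq_bigr => e _; rewrite big_map /=.
set C := c xm.1 r e.1.1.
have E : forall pr : R * seq (X * (fdist R X * M)),
    e.2 * pr.1 * (C + behav_run_cost c e.1.1 rs pr.2) =
    e.2 * C * pr.1 + e.2 * (pr.1 * behav_run_cost c e.1.1 rs pr.2).
  by move=> pr; ring.
rewrite (eq_bigr _ (fun pr _ => E pr)) big_split /= -mulr_sumr -mulr_sumr.
by have := Bm1 e.1 rs; rewrite /Bm => ->; rewrite mulr1 mulrDr.
Qed.

Definition Am k rs := \sum_(pr <- mixed_runs next k rs) pr.1.
Definition Ac k rs :=
  \sum_(pr <- mixed_runs next k rs) pr.1 * mixed_run_cost next c k rs pr.2.

Lemma Am1 k rs : reach k -> Am k rs = 1.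
Proof.
elim: rs k => [|r rs IH] k Hk; first by rewrite /Am /= big_cons big_nil addr0.
rewrite /Am /= big_flatten /= big_map -(lam_sum1 r Hk).
apply: eq_big_In => kl Hin; rewrite big_map /= -mulr_sumr.
by have := IH kl.1 (reach_next Hk Hin); rewrite /Am => ->; rewrite mulr1.
Qed.

Lemma Ac_cons k r rs : reach k -> Ac k (r :: rs) =
  mixed_step_cost next c k r + \sum_(kl <- next k r) kl.2 * Ac kl.1 rs.
Proof.
move=> Hk; rewrite /Ac /= big_flatten /= big_map.
set C := mixed_step_cost next c k r.
rewrite (eq_big_In (G := fun kl => kl.2 * C + kl.2 * Ac kl.1 rs)).
  by rewrite big_split /= -mulr_suml (lam_sum1 r Hk) mul1r.
move=> kl Hin; rewrite big_map /=.
have E : forall pr : R * seq (fdist R X * M),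
    kl.2 * pr.1 * (C + mixed_run_cost next c kl.1 rs pr.2) =
    kl.2 * C * pr.1 + kl.2 * (pr.1 * mixed_run_cost next c kl.1 rs pr.2).
  by move=> pr; ring.
rewrite (eq_bigr _ (fun pr _ => E pr)) big_split /= -mulr_sumr -mulr_sumr.
by have := Am1 rs (reach_next Hk Hin); rewrite /Am => ->; rewrite mulr1.
Qed.

Lemma invariant k rs : reach k ->
  \sum_(x <- Sk k) pi k x * Bc (x, k) rs = Ac k rs.
Proof.
elim: rs k => [|r rs IH] k Hk.
  rewrite /Ac /= big_seq1 mul1r big1 // => x _.
  by rewrite /Bc /= big_seq1 mul1r mulr0.
rewrite Ac_cons //.
rewrite (eq_big_seq (fun x => \sum_(kl <- next k r) \sum_(y <- Tk k r)
   G k r x y * q k r kl y * (c x r y + Bc (y, kl.1) rs))); last first.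
  move=> x xS; rewrite Bc_cons /= /next'.
  have [p0|p0] := eqVneq (pi k x) 0.
    rewrite p0 mul0r; symmetry; apply: big1 => kl _.
    by apply: big1_seq => y /andP[_ yT]; rewrite (G_zero_row Hk xS p0 yT) !mul0r.
  rewrite asboolT //.
  rewrite big_flatten /= big_map mulr_sumr; apply: eq_bigr => kl _.
  rewrite big_map mulr_sumr; apply: eq_bigr => y _ /=.
  rewrite /wgt.
  have -> : pi k x * (G k r x y / pi k x * q k r kl y * (c x r y + Bc (y, kl.1) rs))
     = G k r x y * q k r kl y * (c x r y + Bc (y, kl.1) rs) * (pi k x / pi k x).
    by ring.
  by rewrite divff // mulr1.
have -> : \sum_(x <- Sk k) \sum_(kl <- next k r) \sum_(y <- Tk k r)
      G k r x y * q k r kl y * (c x r y + Bc (y, kl.1) rs) =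
    \sum_(x <- Sk k) \sum_(kl <- next k r) \sum_(y <- Tk k r)
      G k r x y * q k r kl y * c x r y +
    \sum_(x <- Sk k) \sum_(kl <- next k r) \sum_(y <- Tk k r)
      G k r x y * q k r kl y * Bc (y, kl.1) rs.
  rewrite -big_split; apply: eq_bigr => x _; rewrite -big_split.
  apply: eq_bigr => kl _; rewrite -big_split; apply: eq_bigr => y _.
  by rewrite mulrDr.
congr (_ + _).
  rewrite G_cost //; apply: eq_big_seq => x xS; rewrite exchange_big /=.
  apply: eq_big_seq => y yT.
  rewrite (eq_bigr (fun kl => G k r x y * c x r y * q k r kl y)) => [|kl _]; last first.
    by rewrite mulrAC.
  by rewrite -mulr_sumr q_sum mulrAC Gq.
rewrite exchange_big /=; apply: eq_big_In => kl Hin; rewrite exchange_big /=.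
rewrite (eq_big_seq (fun y => kl.2 * (pi kl.1 y * Bc (y, kl.1) rs)))
  => [|y yT]; last first.
  by rewrite -mulr_suml -mulr_suml G_col // barq // mulrA.
rewrite -mulr_sumr -(IH kl.1 (reach_next Hk Hin)); congr (_ * _).
rewrite /Tk /Sk; apply: sum_undup => y Hy.
have py : pi kl.1 y != 0 by apply: contraNneq Hy => ->; rewrite mul0r.
have Hy' := InPl (fd_suppP py).
by rewrite Hy' (mem_mix Hin Hy').
Qed.

End Beh.

Lemma main_gen : exists (M' : Type) (m0' : M')
    (next'' : X -> M' -> Rq -> seq ((X * M') * R)),
    behav_valid next'' /\
    forall rs : seq Rq,
      behav_expected_cost s0 m0' next'' c rs = mixed_expected_cost s0 m0 next c rs.
Proof.
have [G HG] := exists_G.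
exists (fdist R X * M)%type, (dirac R s0, m0), (next' G); split; first exact: valid'.
move=> rs; have := @invariant G HG (dirac R s0, m0) rs (reach0 _ _ _).
rewrite /Sk /= big_seq1 /pi /= /dirac_pmf asboolT // mul1r => H.
exact: H.
Qed.

End Main.

Theorem mainTheorem1 (R : realType) (X Rq : Type) (s0 : X)
  (d : X -> X -> R) (c : X -> Rq -> X -> R)
  (d_ge0 : forall x y, 0 <= d x y)
  (d_refl : forall x, d x x = 0)
  (d_tri : forall x y z, d x z <= d x y + d y z)
  (c_ge0 : forall x r y, 0 <= c x r y)
  (c_d : forall u x y v r, c u r v <= d u x + c x r y + d y v)
  (M : Type) (m0 : M) (next : (fdist R X * M) -> Rq -> seq ((fdist R X * M) * R))
  (hA : mixed_valid s0 m0 next) :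
  exists (M' : Type) (m0' : M') (next' : X -> M' -> Rq -> seq ((X * M') * R)),
    behav_valid next' /\
    forall rs : seq Rq,
      behav_expected_cost s0 m0' next' c rs = mixed_expected_cost s0 m0 next c rs.
Proof.
exact: main_gen hA.
Qed.
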